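(* Let $0\le l<g$ and let $\Omega$ be a formal 1-form. (1) If $\Omega$ has leading variable $\beta'$ (of some degree) for $\mathcal F_{\Gamma,\beta_{l+1}}$ with $\beta'\in\mathcal E_\Gamma$, $\beta'<\beta_{l+1}$, $\mathrm{Beg}_\Gamma(\Omega)=\beta'$ and strictly increasing positive rational $c$-sequence, then $\nu_\Gamma(\Omega)\in e_l\mathbb Z$. (2) If $\Omega$ has leading variable $\beta_{l+1}$ of degree $0$ for $\mathcal F_{\Gamma,\beta_{l+1}}$, with $\mathrm{Beg}_\Gamma(\Omega)=\beta_{l+1}$ and strictly increasing positive rational $c$-sequence, then $\nu_\Gamma(\Omega)\equiv\beta_{l+1}\pmod{e_l}$. (3) If $\Omega$ has leading variable $\beta_{l+1}$ (of any degree) for $\mathcal F_{\Gamma,\beta_{l+1}}$ with strictly increasing positive rational $c$-sequence, or has leading variable $\mathfrak n(\beta_{l+1})$ of degree $0$ for $\mathcal F_{\Gamma,\beta_{l+1}}$ with strictly increasing positive rational $c$-sequence and associated $R$ of the form $c\,a_{\beta_{l+1}}^s$ ($c\in\mathbb C^*$, $s\ge0$), then $\nu_\Gamma(\Omega)\equiv\mathrm{Beg}_\Gamma(\Omega)\pmod{e_{l+1}}$ (when $\mathrm{Beg}_\Gamma(\Omega)<\infty$).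
   Context: $\Gamma$ is a singular irreducible plane branch with Puiseux parametrization $\Gamma(t)=(t^n,\sum_{\beta\ge\beta_1}a_{\beta,\Gamma}t^\beta)$, characteristic exponents $\beta_1<\dots<\beta_g$; $e_0=n$, $e_j=\gcd(e_{j-1},\beta_j)$. For a 1-form $\omega$ with $\Gamma^*\omega=h(t)dt$, $\nu_\Gamma(\omega)=\mathrm{ord}_th+1$. $\mathcal E_\Gamma=\bigcup_i\{\beta_i+ke_i:k\ge0\}$; $\mathfrak n(\beta)$ next element. Family and leading variable: treat $a_{\beta'}$ as indeterminates; $\mathcal F_{\Gamma,\beta_j}$ = formal curves $\Gamma'(t)=(t^n,\sum_{\beta'\in\mathcal E_\Gamma}a_{\beta'}t^{\beta'})$ with $a_{\beta'}=a_{\beta',\Gamma}$ for $\beta'<\beta_j$. Write $t\,\Gamma'^*\omega=g(t)dt$. $\omega$ has leading variable $\beta$ of degree $m$ for $\mathcal F_{\Gamma,\beta_j}$ if: (i) $g=t^k\sum_{r\ge0}C_{\mathfrak n^r(\beta)}t^{\mathfrak n^r(\beta)}$, $k\ge0$, $C_{\mathfrak n^r(\beta)}$ polynomial in $a_{\beta'}$, $\beta_j\le\beta'\le\mathfrak n^r(\beta)$, $C_\beta\not\equiv0$; (ii) $C_{\mathfrak n^r(\beta)}=\tilde c\,c_{\mathfrak n^r(\beta)}a_\beta^mR\,a_{\mathfrak n^r(\beta)}+Q_{\mathfrak n^r(\beta)}$ with $\tilde c\in\mathbb C^*$, $c$-sequence $c_\beta=1,c_{\mathfrak n(\beta)},\dots$,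 $R$ polynomial in $a_{\beta'}$, $\beta_j\le\beta'<\beta$ (constant if none), $R(\Gamma)\ne0$, $Q_{\mathfrak n^r(\beta)}$ polynomial in $a_{\beta'}$, $\beta'<\mathfrak n^r(\beta)$ (variables with index $<\beta_j$ read as constants $a_{\beta',\Gamma}$); (iii) $m=0$ if $\beta\notin\{\beta_1,\dots,\beta_j\}$; (iv) $k\equiv m\beta\pmod{e_\ell}$, $\ell=\max(\{0\}\cup\{r:\beta_r<\beta\})$. $\mathrm{Beg}_\Gamma(\omega)$ is the first $\beta'\in\mathcal E_\Gamma$ with $C_{\beta'}(\Gamma)\ne0$ (evaluation at $a_{\beta'}=a_{\beta',\Gamma}$). *)

(* Defs.v *)
From HB Require Import structures.
From mathcomp Require Import all_boot all_order all_algebra.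
From mathcomp Require Import finmap.
From mathcomp Require Import reals Rstruct.
From mathcomp Require Import complex.
From mathcomp.multinomials Require Import monalg.

Unset Implicit Arguments.
Unset Strict Implicit.
Unset Printing Implicit Defensive.

Import Order.TTheory GRing.Theory Num.Theory.
Local Open Scope ring_scope.

Definition CC : numClosedFieldType := (Rdefinitions.R)[i].

(* The ring of polynomials over C in the countably many indeterminates
   a_0, a_1, a_2, ... ; the indeterminate a_b is [avar b].                  *)
Definition Pa := {malg CC[cmonom nat]}.
Definition avar (b : nat) : Pa := << ucm b >>.

Definition vars_in (S : pred nat) (p : Pa) : Prop :=
  forall m, m \in msupp p -> forall i, i \in finsupp (cmonom_val m) -> S i.

Definition peval (v : nat -> CC) (p : Pa) : CC :=
  mmap idfun (fun m : cmonom nat => \prod_(i <- finsupp (cmonom_val m)) v i ^+ (cmonom_val m i)) p.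

(* For a formal curve (t^n, sum_b yc b t^b) (with yc 0 = 0)
   and a formal 1-form  Omega = A(x,y) dx + B(x,y) dy  (A i j = coefficient
   of x^i y^j), we have  t * Gamma^* Omega = g(t) dt  with
      g(t) = n t^n A(t^n, y(t)) + (t y'(t)) B(t^n, y(t)).
   [tpull n yc A B N] is the coefficient of t^N in g.  It is computed with
   all series truncated at order N, which is exact since y(t) has no
   constant term.                                                           *)
Definition tpull {R : comNzRingType} (n : nat) (yc : nat -> R)
    (A B : nat -> nat -> R) (N : nat) : R :=
  let y : {poly R} := \sum_(b < N.+1) yc b *: 'X^b in
  let ty : {poly R} := \sum_(b < N.+1) (yc b *+ b) *: 'X^b in
  let sub (F : nat -> nat -> R) : {poly R} :=
    \sum_(i < N.+1) \sum_(j < N.+1) F i j *: ('X^(n * i) * y ^+ j) in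
  ((n%:R *: 'X^n) * sub A + ty * sub B)`_N.

(* Characteristic data of the branch  Gamma(t) = (t^n, sum_b a b t^b).
   beta j (1 <= j <= g) are the characteristic exponents;
   e_0 = n, e_j = gcd(e_{j-1}, beta_j).                                     *)
Fixpoint ee (n : nat) (beta : nat -> nat) (j : nat) : nat :=
  match j with 0 => n | j'.+1 => gcdn (ee n beta j') (beta j'.+1) end.

(* Gamma is a singular irreducible plane branch with Puiseux
   parametrization (t^n, sum_{b >= beta_1} a b t^b) whose characteristic
   exponents are beta_1 < ... < beta_g.                                     *)
Definition is_branch (n : nat) (a : nat -> CC) (g : nat) (beta : nat -> nat) : Prop :=
  [/\ (2 <= n)%N,
      (1 <= g)%N,
      (forall b, (b < beta 1)%N -> a b = 0),
      (forall j, (1 <= j <= g)%N ->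
         [/\ a (beta j) != 0, ~~ (ee n beta j.-1 %| beta j)%N &
             forall b, a b != 0 -> ~~ (ee n beta j.-1 %| b)%N -> (beta j <= b)%N])
    & ee n beta g = 1%N].

Definition in_EG (n g : nat) (beta : nat -> nat) (b : nat) : bool :=
  has (fun i => (beta i <= b)%N && (ee n beta i %| b - beta i)%N) (iota 1 g).

(* next element of E_Gamma after b (the bounded search range always contains
   it, since beta_g + N is in E_Gamma for all N, as e_g = 1)                *)
Definition nextEG (n g : nat) (beta : nat -> nat) (b : nat) : nat :=
  head 0%N [seq x <- iota b.+1 (b + beta g).+1 | in_EG n g beta x].

Definition ell (g : nat) (beta : nat -> nat) (b : nat) : nat :=
  \max_(1 <= r < g.+1 | (beta r < b)%N) r.

(* The family F_{Gamma, beta_j}: coefficient of t^b of the generic member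
   (a_{b,Gamma} for b < beta_j, the indeterminate a_b for b >= beta_j,
   b in E_Gamma; 0 outside E_Gamma).                                        *)
Definition famcoef (n : nat) (a : nat -> CC) (g : nat) (beta : nat -> nat)
    (j : nat) (b : nat) : Pa :=
  if in_EG n g beta b then (if (b < beta j)%N then (a b)%:MP else avar b) else 0.

(* coefficient of t^N in g(t), where t Gamma'^* Omega = g(t) dt, Gamma' the
   generic member of F_{Gamma, beta_j}                                      *)
Definition famser n a g beta (j : nat) (A B : nat -> nat -> CC) (N : nat) : Pa :=
  tpull n (famcoef n a g beta j) (fun i l => (A i l)%:MP) (fun i l => (B i l)%:MP) N.

(* [nu_is n a A B N] : nu_Gamma(Omega) = N, i.e. ord_t h + 1 = N where
   Gamma^* Omega = h(t) dt; equivalently ord_t (t h) = N.                   *)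
Definition nu_is (n : nat) (a : nat -> CC) (A B : nat -> nat -> CC) (N : nat) : Prop :=
  tpull n a A B N != 0 /\ forall M, (M < N)%N -> tpull n a A B M = 0.

(* Omega has leading variable bt of degree m for F_{Gamma, beta_j}, with
   exponent k, constant ct (= c tilde), c-sequence cs (cs x = c_x),
   polynomial R and polynomials Q r (= Q_{n^r(bt)}).                        *)
Definition leading_variable n a g beta (A B : nat -> nat -> CC)
    (j bt m k : nat) (ct : CC) (cs : nat -> CC) (R : Pa) (Q : nat -> Pa) : Prop :=
  let nx r := iter r (nextEG n g beta) bt in
  let G := famser n a g beta j A B in
  let fv i := in_EG n g beta i && (beta j <= i)%N in
  (forall N, (forall r, N != (k + nx r)%N) -> G N = 0) /\
  (forall r, vars_in (fun i => fv i && (i <= nx r)%N) (G (k + nx r)%N)) /\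
  G (k + bt)%N != 0 /\
  ct != 0 /\ cs bt = 1 /\
  (forall r, G (k + nx r)%N =
      ct%:MP * (cs (nx r))%:MP * famcoef n a g beta j bt ^+ m * R
        * famcoef n a g beta j (nx r) + Q r) /\
  vars_in (fun i => fv i && (i < bt)%N) R /\
  peval a R != 0 /\
  (forall r, vars_in (fun i => fv i && (i < nx r)%N) (Q r)) /\
  (~~ has (fun i => beta i == bt) (iota 1 j) -> m = 0%N) /\
  k = (m * bt)%N %[mod ee n beta (ell g beta bt)].

Definition cseq_pos_incr n g beta (bt : nat) (cs : nat -> CC) : Prop :=
  exists q : nat -> rat,
    [/\ forall r, cs (iter r (nextEG n g beta) bt) = ratr (q r),
        forall r, 0 < q r &
        forall r, q r < q r.+1].

(* [beg_is ... r] : Beg_Gamma(Omega) = n^r(bt), i.e. n^r(bt) is the first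
   element x of E_Gamma (x >= bt) with C_x(Gamma) != 0, where C_x is the
   coefficient of t^{k+x} in g.                                             *)
Definition beg_is n a g beta (A B : nat -> nat -> CC) (j bt k r : nat) : Prop :=
  let C r' := peval a (famser n a g beta j A B (k + iter r' (nextEG n g beta) bt)%N) in
  C r != 0 /\ forall r', (r' < r)%N -> C r' = 0.

(* Main.v *)
Require Import Defs.
From HB Require Import structures.
From mathcomp Require Import all_boot all_order all_algebra.
From mathcomp Require Import finmap.
From mathcomp Require Import reals Rstruct.
From mathcomp Require Import complex.
From mathcomp.multinomials Require Import monalg.
Import Order.TTheory GRing.Theory Num.Theory.
Local Open Scope ring_scope.
Local Open Scope fset_scope.

Definition hv (v : nat -> CC) (m : cmonom nat) : CC :=
  \prod_(i <- finsupp (cmonom_val m)) v i ^+ (cmonom_val m i).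

Lemma hvE v m (D : {fset nat}) : finsupp (cmonom_val m) `<=` D ->
  hv v m = \prod_(i <- D) v i ^+ (cmonom_val m i).
Proof.
move=> le; rewrite /hv (big_fset_incl _ le) // => x _.
by rewrite -cmE_neq0 => /negbNE/eqP ->; rewrite expr0.
Qed.

Lemma hv_mm v : mmorphism (hv v).
Proof.
split; last by rewrite /hv mdom1 big_seq_fset0.
move=> x y /=.
set D := finsupp (cmonom_val x) `|` finsupp (cmonom_val y).
rewrite (hvE v (mmul x y) D); last by rewrite /D -mdomD.
rewrite (hvE v x D) ?fsubsetUl // (hvE v y D) ?fsubsetUr //.
rewrite -big_split /=; apply: eq_bigr => i _; by rewrite cmM exprD.
Qed.

HB.instance Definition _ v := isMultiplicative.Build _ _ (hv v) (hv_mm v).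

Lemma peval_rm v : multiplicative (peval v) /\ additive (peval v).
Proof.
split; [exact: (@mmap_is_multiplicative _ _ _ idfun (hv v)) | exact: mmap_is_additive].
Qed.

Lemma tpull_map (R S : comNzRingType) (f : {rmorphism R -> S}) n yc A B N :
  f (tpull n yc A B N) =
  tpull n (fun b => f (yc b)) (fun i j => f (A i j)) (fun i j => f (B i j)) N.
Proof.
rewrite /tpull -coef_map; congr (_`_N).
have my (c : nat -> R) : map_poly f (\sum_(b < N.+1) c b *: 'X^b) =
    \sum_(b < N.+1) f (c b) *: 'X^b.
  rewrite rmorph_sum; apply: eq_bigr => b _. by rewrite /= map_polyZ map_polyXn.
have ms (F : nat -> nat -> R) :
  map_poly f (\sum_(i < N.+1) \sum_(j < N.+1)
     F i j *: ('X^(n * i) * (\sum_(b < N.+1) yc b *: 'X^b) ^+ j)) =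
  \sum_(i < N.+1) \sum_(j < N.+1)
     f (F i j) *: ('X^(n * i) * (\sum_(b < N.+1) f (yc b) *: 'X^b) ^+ j).
  rewrite rmorph_sum; apply: eq_bigr => i _.
  rewrite rmorph_sum; apply: eq_bigr => j _.
  by rewrite /= map_polyZ rmorphM /= !rmorphXn /= map_polyX my.
rewrite rmorphD !rmorphM /= !ms (my (fun b => yc b *+ b)) map_polyZ map_polyXn rmorph_nat.
suff -> : \sum_(b < N.+1) f (yc b *+ b) *: 'X^b = \sum_(b < N.+1) (f (yc b) *+ b) *: 'X^b :> {poly S} by [].
by apply: eq_bigr => b _; rewrite rmorphMn.
Qed.

From Stdlib Require Import FunctionalExtensionality.
Set Implicit Arguments.
Unset Strict Implicit.
From mathcomp Require Import zify.

Lemma ee_dvd n beta i j : (i <= j)%N -> (ee n beta j %| ee n beta i)%N.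
Proof.
elim: j => [|j IH]; first by rewrite leqn0 => /eqP ->.
rewrite leq_eqVlt => /orP [/eqP -> //| ]; rewrite ltnS => /IH.
by apply: dvdn_trans; rewrite /= dvdn_gcdl.
Qed.

Lemma ee_beta n beta j : (1 <= j)%N -> (ee n beta j %| beta j)%N.
Proof. by case: j => // j _; rewrite /= dvdn_gcdr. Qed.

Lemma mono1 n a g beta j : is_branch n a g beta -> (1 <= j)%N -> (j < g)%N ->
  (beta j < beta j.+1)%N.
Proof.
case=> _ _ _ Hj _ j1 jg.
have [_ _ H] := Hj j (ltac:(lia)).
have [an nd _] := Hj j.+1 (ltac:(lia)).
rewrite /= in nd.
have le : (beta j <= beta j.+1)%N.
  apply: (H _ an); apply/negP => d; move/negP: nd; apply.
  apply: dvdn_trans d; apply: ee_dvd; lia.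
rewrite ltn_neqAle le andbT; apply/negP => /eqP e.
by move/negP: nd; apply; rewrite -e ee_beta.
Qed.

Lemma mono_le n a g beta i j : is_branch n a g beta -> (1 <= i)%N -> (i <= j)%N ->
  (j <= g)%N -> (beta i <= beta j)%N.
Proof.
move=> hb i1; elim: j => [|j IH]; first by lia.
rewrite leq_eqVlt => /orP [/eqP -> //| ]; rewrite ltnS => ij jg.
apply: (leq_trans (IH ij (ltnW jg))); apply: ltnW; apply: mono1 hb _ jg; lia.
Qed.

Lemma mono_lt n a g beta i j : is_branch n a g beta -> (1 <= i)%N -> (i < j)%N ->
  (j <= g)%N -> (beta i < beta j)%N.
Proof.
move=> hb i1 ij jg.
have h1 := mono1 hb i1 (ltac:(lia) : (i < g)%N).
have h2 := mono_le hb (ltac:(lia) : (1 <= i.+1)%N) ij jg.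
lia.
Qed.

Lemma in_EGP n g beta b : reflect (exists i, [/\ (1 <= i <= g)%N, (beta i <= b)%N &
  (ee n beta i %| b - beta i)%N]) (in_EG n g beta b).
Proof.
apply: (iffP hasP).
  move=> [i ir /andP [h1 h2]]; rewrite mem_iota in ir; exists i; split => //; lia.
by move=> [i [r h1 h2]]; exists i; rewrite ?mem_iota ?h1 ?h2 //; lia.
Qed.

Lemma beta_EG n a g beta j : is_branch n a g beta -> (1 <= j <= g)%N ->
  in_EG n g beta (beta j).
Proof. by move=> _ r; apply/in_EGP; exists j; rewrite subnn dvdn0. Qed.

Lemma a_EG n a g beta b : is_branch n a g beta -> a b != 0 -> in_EG n g beta b.
Proof.
move=> hb ab; have hb' := hb; case: hb' => _ g1 Hb1 Hj eg.
suff claim : forall d i, (i + d)%N = g -> (1 <= i)%N -> (beta i <= b)%N -> in_EG n g beta b.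
  apply: (claim (g - 1)%N 1%N) => //; first by lia.
  by rewrite leqNgt; apply/negP => /Hb1 /eqP; rewrite (negPf ab).
elim=> [|d IH] i e i1 bi.
  by apply/in_EGP; exists i; split => //; [lia | rewrite addn0 in e; rewrite e eg dvd1n].
case: (leqP (beta i.+1) b) => h; first by apply: (IH i.+1) => //; lia.
have [_ _ H] := Hj i.+1 (ltac:(lia)).
have d1 : (ee n beta i %| b)%N.
  by apply/negPn/negP => nd; have := H b ab nd; rewrite leqNgt h.
apply/in_EGP; exists i; split => //; first by lia.
by apply: dvdn_sub => //; apply: ee_beta.
Qed.

Lemma head_iota (p : pred nat) m len : has p (iota m len) ->
  let h := head 0%N [seq x <- iota m len | p x] in
  [/\ p h, (m <= h)%N & forall y, (m <= y)%N -> (y < h)%N -> ~~ p y].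
Proof.
elim: len m => [|len IH] m //=.
case pm: (p m) => /=; first by split => // y my ym; lia.
move=> /IH [h1 h2 h3]; split => //; first by lia.
move=> y my yh; case: (ltnP m y) => my'; first by apply: h3.
have ym : y = m by lia.
by rewrite ym pm.
Qed.

Lemma nextP n a g beta b : is_branch n a g beta ->
  [/\ (b < nextEG n g beta b)%N, in_EG n g beta (nextEG n g beta b) &
   forall y, (b < y)%N -> (y < nextEG n g beta b)%N -> ~~ in_EG n g beta y].
Proof.
move=> hb; have hb' := hb; case: hb' => _ g1 _ _ eg.
have hs : has (in_EG n g beta) (iota b.+1 (b + beta g).+1).
  apply/hasP; exists (b.+1 + beta g)%N; first by rewrite mem_iota; lia.
  by apply/in_EGP; exists g; split; [lia | lia | rewrite eg dvd1n].
have [h1 h2 h3] := head_iota hs.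
by rewrite /nextEG; split => // y y1 y2; apply: h3.
Qed.

Lemma nx_ge n a g beta bt r : is_branch n a g beta ->
  (bt + r <= iter r (nextEG n g beta) bt)%N.
Proof.
move=> hb; elim: r => [|r IH] /=; first by rewrite addn0.
have [h _ _] := nextP (iter r (nextEG n g beta) bt) hb; lia.
Qed.

Lemma nx_lt n a g beta bt r r' : is_branch n a g beta -> (r < r')%N ->
  (iter r (nextEG n g beta) bt < iter r' (nextEG n g beta) bt)%N.
Proof.
move=> hb; elim: r' => [|r' IH] // /=.
have [h _ _] := nextP (iter r' (nextEG n g beta) bt) hb.
rewrite ltnS leq_eqVlt => /orP [/eqP -> // | /IH]; lia.
Qed.

Lemma ell_le g beta x L : (forall r, (1 <= r <= g)%N -> (beta r < x)%N -> (r <= L)%N) ->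
  (ell g beta x <= L)%N.
Proof.
move=> H; rewrite /ell big_nat_cond.
apply: (big_ind (fun y => y <= L)%N) => //; first by move=> y z; rewrite geq_max => -> ->.
by move=> r /andP [/andP [r1 rg] br]; apply: H => //; lia.
Qed.

Lemma dvd_k n g beta bt m k L : k = (m * bt)%N %[mod ee n beta (ell g beta bt)] ->
  (ell g beta bt <= L)%N -> (ee n beta L %| m * bt)%N -> (ee n beta L %| k)%N.
Proof.
move=> hk hL hd; have d := ee_dvd n beta hL.
by rewrite /dvdn -(modn_dvdm k d) hk modn_dvdm.
Qed.

Lemma m_avar v b : mmap idfun (hv v) (avar b) = v b.
Proof.
rewrite /avar mmapU /= mul1r /hv mdomU big_seq_fset1 cmUU expr1 //.
Qed.

Lemma m_C v c : mmap idfun (hv v) c%:MP = c.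
Proof. by rewrite mmapC. Qed.

Definition pev v : {rmorphism Pa -> CC} := mmap idfun (hv v).
Lemma pevE v x : pev v x = mmap idfun (hv v) x.
Proof. by []. Qed.

Lemma tpull_ext (R : comNzRingType) n (yc yc' : nat -> R) (A A' B B' : nat -> nat -> R) N :
  (forall b, yc b = yc' b) -> (forall i l, A i l = A' i l) -> (forall i l, B i l = B' i l) ->
  tpull n yc A B N = tpull n yc' A' B' N.
Proof.
move=> h1 h2 h3.
have -> : yc = yc' by apply: functional_extensionality.
have -> : A = A' by do 2 (apply: functional_extensionality => ?); apply: h2.
have -> : B = B' by do 2 (apply: functional_extensionality => ?); apply: h3.
by [].
Qed.

Lemma peval_famser n a g beta j A B N : is_branch n a g beta ->
  peval a (famser n a g beta j A B N) = tpull n a A B N.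
Proof.
move=> hb; rewrite /famser.
have -> : peval a (tpull n (famcoef n a g beta j) (fun i l => (A i l)%:MP)
      (fun i l => (B i l)%:MP) N) = pev a (tpull n (famcoef n a g beta j) (fun i l => (A i l)%:MP)
      (fun i l => (B i l)%:MP) N) by [].
rewrite (tpull_map _ _ (pev a)). apply: tpull_ext => [b|i l|i l]. 2: by rewrite pevE m_C. 2: by rewrite pevE m_C. rewrite /famcoef; case: ifP => hE. case: ifP => _. by rewrite pevE m_C. by rewrite pevE m_avar. rewrite rmorph0. case: (eqVneq (a b) 0) => // /(a_EG hb). by rewrite hE. Qed.

Lemma nu_lemma n a g beta A B j bt k r0 : is_branch n a g beta ->
  (forall N, (forall r, N != (k + iter r (nextEG n g beta) bt)%N) ->
     famser n a g beta j A B N = 0) ->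
  beg_is n a g beta A B j bt k r0 ->
  nu_is n a A B (k + iter r0 (nextEG n g beta) bt).
Proof.
move=> hb H0 [Hc Hlt]; split.
  by rewrite -(peval_famser j A B _ hb).
move=> M lt; rewrite -(peval_famser j A B _ hb).
case: (boolP (has (fun r => M == k + iter r (nextEG n g beta) bt)%N (iota 0 M.+1))).
  move/hasP => [r _ /eqP e]; rewrite e; apply: Hlt.
  case: (ltnP r r0) => // h; exfalso; rewrite e in lt.
  move: h; rewrite leq_eqVlt => /orP [/eqP e' | h].
    by move: lt; rewrite e' ltnn.
  have := nx_lt bt hb h; lia.
move=> hn; rewrite H0; first by change (pev a 0 = 0); exact: rmorph0.
move=> r; apply/eqP => e; move/hasP: hn; apply; exists r; last by rewrite e.
have := nx_ge bt r hb; rewrite mem_iota; lia.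
Qed.

Local Close Scope fset_scope.
Unset Implicit Arguments.
Set Strict Implicit.

Theorem mainTheorem15 (n : nat) (a : nat -> CC) (g : nat) (beta : nat -> nat)
    (A B : nat -> nat -> CC) (l : nat) :
  is_branch n a g beta -> (l < g)%N ->
  (* (1) *)
  (forall (bt m k : nat) (ct : CC) (cs : nat -> CC) (R : Pa) (Q : nat -> Pa),
     in_EG n g beta bt -> (bt < beta l.+1)%N ->
     leading_variable n a g beta A B l.+1 bt m k ct cs R Q ->
     cseq_pos_incr n g beta bt cs ->
     beg_is n a g beta A B l.+1 bt k 0 ->
     exists N, nu_is n a A B N /\ (ee n beta l %| N)%N)
  /\
  (* (2) *)
  (forall (k : nat) (ct : CC) (cs : nat -> CC) (R : Pa) (Q : nat -> Pa),
     leading_variable n a g beta A B l.+1 (beta l.+1) 0 k ct cs R Q ->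
     cseq_pos_incr n g beta (beta l.+1) cs ->
     beg_is n a g beta A B l.+1 (beta l.+1) k 0 ->
     exists N, nu_is n a A B N /\ N = beta l.+1 %[mod ee n beta l])
  /\
  (* (3) *)
  (forall (bt m k : nat) (ct : CC) (cs : nat -> CC) (R : Pa) (Q : nat -> Pa),
     ((bt = beta l.+1 /\
       leading_variable n a g beta A B l.+1 bt m k ct cs R Q)
      \/
      (bt = nextEG n g beta (beta l.+1) /\ m = 0%N /\
       leading_variable n a g beta A B l.+1 bt m k ct cs R Q /\
       exists (c : CC) (s : nat), c != 0 /\ R = c%:MP * avar (beta l.+1) ^+ s)) ->
     cseq_pos_incr n g beta bt cs ->
     forall r, beg_is n a g beta A B l.+1 bt k r ->
     exists N, nu_is n a A B N /\
       N = iter r (nextEG n g beta) bt %[mod ee n beta l.+1]).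
Proof.
move=> hb lg.
have ellb : forall x, (x <= beta l.+1)%N -> (ell g beta x <= l)%N.
  move=> x hx; apply: ell_le => r /andP [r1 rg] br; rewrite leqNgt; apply/negP => lr.
  have := mono_le hb (ltac:(lia) : (1 <= l.+1)%N) lr rg; lia.
split; last split.
- move=> bt m k ct cs R Q hE hlt LV _ hbeg.
  case: LV => H0 [_ [_ [_ [_ [_ [_ [_ [_ [_ Hk]]]]]]]]].
  exists (k + bt)%N; split; first exact: (nu_lemma hb H0 hbeg).
  have hell := ellb bt (ltnW hlt).
  move/in_EGP: hE => [i [/andP [i1 ig] bi di]].
  have il : (i <= l)%N.
    rewrite leqNgt; apply/negP => li.
    have := mono_le hb (ltac:(lia) : (1 <= l.+1)%N) li ig; lia.
  have dbt : (ee n beta l %| bt)%N.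
    apply: dvdn_trans (ee_dvd n beta il) _.
    by rewrite -(subnK bi) dvdn_add // ee_beta.
  apply: dvdn_add => //; apply: dvd_k Hk hell _.
  by rewrite dvdn_mull.
- move=> k ct cs R Q LV _ hbeg.
  case: LV => H0 [_ [_ [_ [_ [_ [_ [_ [_ [_ Hk]]]]]]]]].
  exists (k + beta l.+1)%N; split; first exact: (nu_lemma hb H0 hbeg).
  have dk := dvd_k Hk (ellb _ (leqnn _)) (ltac:(by rewrite mul0n dvdn0)).
  by rewrite /dvdn in dk; rewrite -modnDml (eqP dk) add0n.
- move=> bt m k ct cs R Q H _ r hbeg.
  have [LV [hL hd]] : leading_variable n a g beta A B l.+1 bt m k ct cs R Q /\
      (ell g beta bt <= l.+1)%N /\ (ee n beta l.+1 %| m * bt)%N.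
    case: H => [[hbt LV] | [hbt [hm [LV _]]]].
      split => //; split; first by rewrite hbt; apply: leq_trans (ellb _ (leqnn _)) _.
      by rewrite hbt dvdn_mull // ee_beta.
    split => //; split; last by rewrite hm mul0n dvdn0.
    apply: ell_le => r' /andP [r1 rg] br; rewrite leqNgt; apply/negP => lr.
    have l2 : (l.+2 <= g)%N by lia.
    have h1 := mono_le hb (ltac:(lia) : (1 <= l.+2)%N) lr rg.
    have h2 := mono_lt hb (ltac:(lia) : (1 <= l.+1)%N) (ltnSn l.+1) l2.
    have hE := beta_EG hb (ltac:(lia) : (1 <= l.+2 <= g)%N).
    have [_ _ h3] := nextP (beta l.+1) hb.
    have : ~~ in_EG n g beta (beta l.+2).
      apply: h3 => //; rewrite -hbt; lia.
    by rewrite hE.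
  case: LV => H0 [_ [_ [_ [_ [_ [_ [_ [_ [_ Hk]]]]]]]]].
  exists (k + iter r (nextEG n g beta) bt)%N; split; first exact: (nu_lemma hb H0 hbeg).
  have dk := dvd_k Hk hL hd.
  by rewrite /dvdn in dk; rewrite -modnDml (eqP dk) add0n.
Qed.
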